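(* Every point of $\Delta$ with both coordinates rational belongs to $\bigcup_{n\ge0}\bigcup_{k_1,\dots,k_n\in\mathbb N}H_{k_1}\circ\cdots\circ H_{k_n}(\partial\Delta)$ (where the term $n=0$ is $\partial\Delta$ itself).
   Context: $\Delta=\{(u,v)\in\mathbb R^2:u\ge0,v\ge0,u+v\le1\}$, with boundary $\partial\Delta$. For $k\in\mathbb N$, $H_k:\Delta\to\Delta$ is $H_k(u,v)=\frac{1}{k(1-v)+1-u}(v,1-v)$. *)

(* Defs.v *)
From Stdlib Require Import Reals QArith List.
Open Scope R_scope.

Definition TriDelta (p : R * R) : Prop :=
  0 <= fst p /\ 0 <= snd p /\ fst p + snd p <= 1.

Definition bdDelta (p : R * R) : Prop :=
  TriDelta p /\ (fst p = 0 \/ snd p = 0 \/ fst p + snd p = 1).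

Definition H (k : nat) (p : R * R) : R * R :=
  let u := fst p in let v := snd p in
  let d := INR k * (1 - v) + 1 - u in
  (v / d, (1 - v) / d).

Definition Hcomp (ks : list nat) (p : R * R) : R * R :=
  fold_right H p ks.

Definition is_rational (x : R) : Prop := exists q : Q, Q2R q = x.

(* Main.v *)
Require Import Defs.
From Stdlib Require Import Reals QArith List.
From Stdlib Require Import Lra Lia ZArith.
Open Scope R_scope.

Lemma key_step (a b q : nat) : (0 < a)%nat -> (0 < b)%nat -> (a + b < q)%nat ->
  exists k, (1 <= k)%nat /\ (q <= k*b + a + b)%nat /\ (k*b + a <= q)%nat.
Proof.
  intros Ha Hb Hq.
  exists ((q - a - 1) / b)%nat.
  pose proof (Nat.div_mod_eq (q - a - 1) b) as E.
  pose proof (Nat.mod_upper_bound (q - a - 1) b ltac:(lia)) as M.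
  set (k := ((q - a - 1) / b)%nat) in *.
  set (r := ((q - a - 1) mod b)%nat) in *.
  assert (1 <= k)%nat.
  { destruct k; [lia|lia]. }
  nia.
Qed.

Lemma main_ind (n : nat) : forall a b q : nat, (q <= n)%nat -> (0 < q)%nat -> (a + b <= q)%nat ->
  exists (ks : list nat) (p : R * R),
    Forall (fun k => (1 <= k)%nat) ks /\ bdDelta p /\
    Hcomp ks p = (INR a / INR q, INR b / INR q).
Proof.
  induction n as [|n IH]; intros a b q Hn Hq Hab; [lia|].
  assert (Rq : 0 < INR q) by (apply lt_0_INR; lia).
  destruct (Nat.eq_dec a 0) as [Ha|Ha].
  2: destruct (Nat.eq_dec b 0) as [Hb|Hb].
  3: destruct (Nat.eq_dec (a+b) q) as [Hs|Hs].
  1-3: exists nil, (INR a / INR q, INR b / INR q); split; [apply Forall_nil|]; split; [|reflexivity];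
    assert (Hle : INR a + INR b <= INR q) by (rewrite <- plus_INR; apply le_INR; lia);
    pose proof (pos_INR a); pose proof (pos_INR b);
    unfold bdDelta, TriDelta; simpl; split;
    [ split; [|split]; [unfold Rdiv; apply Rmult_le_pos; [lra|left; apply Rinv_0_lt_compat; lra]|unfold Rdiv; apply Rmult_le_pos; [lra|left; apply Rinv_0_lt_compat; lra]|];
      unfold Rdiv; rewrite <- Rmult_plus_distr_r;
      apply (Rmult_le_reg_r (INR q)); [lra|];
      rewrite Rmult_assoc, Rinv_l, Rmult_1_r, Rmult_1_l; lra | ].
  - left. subst a. simpl. unfold Rdiv. ring.
  - right; left. subst b. simpl. unfold Rdiv. ring.
  - right; right. field_simplify; [|lra]. rewrite <- plus_INR, Hs. field. lra.
  - destruct (key_step a b q ltac:(lia) ltac:(lia) ltac:(lia)) as [k [Hk1 [Hk2 Hk3]]].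
    destruct (IH (k*b + a + b - q)%nat a (a+b)%nat ltac:(lia) ltac:(lia) ltac:(lia))
      as [ks [p [Hf [Hp Hc]]]].
    exists (k :: ks), p. split; [constructor; auto|]. split; [auto|].
    simpl. rewrite Hc.
    assert (E : (k*b + a + b - q + q = k*b + a + b)%nat) by lia.
    apply (f_equal INR) in E. rewrite !plus_INR, mult_INR in E.
    set (a' := INR (k*b + a + b - q)) in *.
    assert (Ra : 0 < INR a) by (apply lt_0_INR; lia).
    assert (Rb : 0 < INR b) by (apply lt_0_INR; lia).
    unfold H; simpl.
    assert (D : INR k * (1 - INR a / INR (a+b)) + 1 - a' / INR (a+b) = INR q / INR (a+b)).
    { assert (A' : a' = INR k * INR b + INR a + INR b - INR q) by lra. rewrite A', plus_INR. field. lra. }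
    rewrite D, plus_INR. f_equal; field; lra.
Qed.

Theorem proposition3p9 (u v : R) :
  TriDelta (u, v) -> is_rational u -> is_rational v ->
  exists (ks : list nat) (p : R * R),
    Forall (fun k => (1 <= k)%nat) ks /\ bdDelta p /\ Hcomp ks p = (u, v).
Proof.
  intros [Hu [Hv Huv]] [[n1 d1] Q1] [[n2 d2] Q2]; simpl in *.
  unfold Q2R in Q1, Q2; simpl in Q1, Q2.
  assert (D1 : 0 < IZR (Z.pos d1)) by (apply IZR_lt; lia).
  assert (D2 : 0 < IZR (Z.pos d2)) by (apply IZR_lt; lia).
  assert (N1 : (0 <= n1)%Z).
  { apply le_IZR. subst u. apply (Rmult_le_reg_r (/ IZR (Z.pos d1))).
    apply Rinv_0_lt_compat; lra. lra. }
  assert (N2 : (0 <= n2)%Z).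
  { apply le_IZR. subst v. apply (Rmult_le_reg_r (/ IZR (Z.pos d2))).
    apply Rinv_0_lt_compat; lra. lra. }
  set (a := Z.to_nat (n1 * Z.pos d2)).
  set (b := Z.to_nat (n2 * Z.pos d1)).
  set (q := Z.to_nat (Z.pos d1 * Z.pos d2)).
  assert (Ea : INR a = IZR n1 * IZR (Z.pos d2)).
  { unfold a. rewrite INR_IZR_INZ, Z2Nat.id by lia. apply mult_IZR. }
  assert (Eb : INR b = IZR n2 * IZR (Z.pos d1)).
  { unfold b. rewrite INR_IZR_INZ, Z2Nat.id by lia. apply mult_IZR. }
  assert (Eq : INR q = IZR (Z.pos d1) * IZR (Z.pos d2)).
  { unfold q. rewrite INR_IZR_INZ, Z2Nat.id by lia. apply mult_IZR. }
  assert (Uu : u = INR a / INR q) by (rewrite Ea, Eq, <- Q1; field; lra).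
  assert (Vv : v = INR b / INR q) by (rewrite Eb, Eq, <- Q2; field; lra).
  assert (Hq : (0 < q)%nat) by (apply INR_lt; simpl; rewrite Eq; nra).
  assert (Hab : (a + b <= q)%nat).
  { apply INR_le. rewrite plus_INR.
    assert (Rq : 0 < INR q) by (apply lt_0_INR; lia).
    rewrite Uu, Vv in Huv. unfold Rdiv in Huv. rewrite <- Rmult_plus_distr_r in Huv.
    apply (Rmult_le_compat_r (INR q)) in Huv; [|lra].
    rewrite Rmult_assoc, Rinv_l, Rmult_1_r, Rmult_1_l in Huv; lra. }
  destruct (main_ind q a b q (le_n _) Hq Hab) as [ks [p H]].
  exists ks, p. rewrite Uu, Vv. exact H.
Qed.
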